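(* For every non-negative integer $n$, the map $(T,\lambda)\mapsto\sigma(T,\lambda)$ is a bijection from the set of all increasing trees with $n$ branchings onto the set of all set compositions of $[n]=\{1,\ldots,n\}$.
   Context: A (planar rooted) tree is a finite planar rooted tree in which every vertex has exactly one outgoing edge (towards the root; the vertex nearest the root has an outgoing root edge) and at least two incoming edges, ordered from left to right; incoming edges either come from another vertex or are leaves. The trivial tree $\varepsilon$ has no vertex (a single edge). For $m\ge 1$ and trees $T_0,\ldots,T_m$, the wedge $\bigvee(T_0,\ldots,T_m)$ is obtained by joining the roots of $T_0,\ldots,T_m$ (in this left-to-right order) to a new vertex, which receives a new root edge; every non-trivial tree is uniquely such a wedge. A vertex with $m+1$ incoming edges carries $m$ branchings, namely the $m$ pairs of consecutive incoming edges at that vertex; a branching is assigned the vertex carrying it. Let $B(T)$ be the set of branchings of $T$ and $b(T)=|B(T)|$. The left-to-right order $\preceq$ on $B(T)$ is defined recursively: if $T=\bigvee(T_0,\ldots,T_m)$ and $b_1,\ldots,b_m$ are the branchings at the root vertex, from left to right (the root branchings, $b_i$ lying between $T_{i-1}$ and $T_i$), then $b_i\prec b\prec b_{i+1}$ for all $b\in B(T_i)$ (with $b_0$, $b_{m+1}$ omitted), and $B(T_i)$ carries its own order. The natural labelling is the unique order-preserving bijection $([n],\le)\to(B(T),\preceq)$, $n=b(T)$. A standard level function on $T$ is a surjective map $\lambda$ from the set of vertices of $T$ onto $[k]$ for some $k\ge 0$ that is strictly increasing along every path from a leaf to the root; an increasing tree is a pair $(T,\lambda)$ with $\lambda$ a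 standard level function, and the level of a branching is the level of its vertex. A set composition of a finite set $S$ of length $k$ is a tuple $(P_1,\ldots,P_k)$ of pairwise disjoint non-empty subsets with union $S$. For an increasing tree $(T,\lambda)$ with $n$ branchings and $k$ levels, $\sigma(T,\lambda)=(P_1,\ldots,P_k)$ where $P_i$ is the set of natural labels of the branchings of $T$ at level $i$. *)

(* Defs.v *)
From mathcomp Require Import all_boot.
Set Implicit Arguments. Unset Strict Implicit. Unset Printing Implicit Defensive.

(* An increasing tree (T, lambda) is represented by the planar rooted tree T
   in which every vertex is decorated by its level lambda(v).
   [ILeaf] is an edge (a leaf, or the trivial tree epsilon);
   [INode k [:: T_0; ...; T_m]] is the wedge \/(T_0,...,T_m) whose new
   (root) vertex has level k. *)
Inductive itree : Type :=
| ILeaf : itree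
| INode : nat -> seq itree -> itree.

Definition root_level (t : itree) : option nat :=
  match t with ILeaf => None | INode k _ => Some k end.

Fixpoint wf_itree (t : itree) : bool :=
  match t with
  | ILeaf => true
  | INode k ch =>
      [&& 1 < size ch,
          all (fun c => if root_level c is Some k' then k' < k else true) ch
        & all wf_itree ch]
  end.

Fixpoint vlevels (t : itree) : seq nat :=
  match t with
  | ILeaf => [::]
  | INode k ch => k :: flatten (map vlevels ch)
  end.

Definition standard_levels (t : itree) : Prop :=
  exists k : nat, forall i : nat, i \in vlevels t <-> (1 <= i <= k).

Definition increasing_tree (t : itree) : Prop :=
  wf_itree t /\ standard_levels t.

Definition nlevels (t : itree) : nat := foldr maxn 0 (vlevels t).

(* The levels of the branchings of T listed in the left-to-right order:
   for T = \/(T_0,...,T_m) with root level k this is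
   B(T_0), k, B(T_1), k, ..., k, B(T_m).
   The j-th entry (0-based) is the level of the branching with natural label j+1. *)
Fixpoint blevels (t : itree) : seq nat :=
  match t with
  | ILeaf => [::]
  | INode k ch =>
      let fix go (l : seq itree) : seq nat :=
        match l with
        | [::] => [::]
        | [:: c] => blevels c
        | c :: l' => blevels c ++ k :: go l'
        end
      in go ch
  end.

Definition nbranchings (t : itree) : nat := size (blevels t).

(* [n] = {1,...,n} is represented by 'I_n, the ordinal j standing for j+1. *)

Definition sigma (n : nat) (t : itree) : seq {set 'I_n} :=
  [seq [set j : 'I_n | nth 0 (blevels t) j == i] | i <- iota 1 (nlevels t)].

Definition set_composition (n : nat) (P : seq {set 'I_n}) : Prop :=
  [/\ all (fun A : {set 'I_n} => A != set0) P,
      pairwise (fun A B : {set 'I_n} => [disjoint A & B]) P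
    & \bigcup_(A <- P) A = [set: 'I_n]].

(* Main.v *)
Require Import Defs.
From mathcomp Require Import all_boot zify.

Fixpoint InT {T : Type} (x : T) (s : seq T) : Prop :=
  match s with [::] => False | y :: s' => y = x \/ InT x s' end.

Fixpoint joink (k : nat) (l : seq (seq nat)) : seq nat :=
  match l with
  | [::] => [::]
  | [:: s] => s
  | s :: l' => s ++ k :: joink k l'
  end.

Lemma blevelsE k ch : blevels (INode k ch) = joink k (map blevels ch).
Proof.
elim: ch => [|c l IH] //=. case: l IH => [|c' l] //= IH. by rewrite IH.
Qed.

Lemma vlevelsE k ch : vlevels (INode k ch) = k :: flatten (map vlevels ch).
Proof. by []. Qed.

Lemma itree_ind2 (P : itree -> Prop) :
  P ILeaf -> (forall k ch, (forall c, InT c ch -> P c) -> P (INode k ch)) ->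
  forall t, P t.
Proof.
move=> HL HN; fix F 1 => t; case: t => [|k ch]; first exact: HL.
apply: HN; elim: ch => [|c l IH] c' /=; first by case.
case=> [<-|H]; [exact: (F c) | exact: (IH c' H)].
Qed.

Lemma all_In (T : Type) (p : pred T) s x : all p s -> InT x s -> p x.
Proof. elim: s => //= y s IH /andP[py ps] [<-|H] //; exact: IH. Qed.

Lemma joink_cons k s l : l != [::] -> joink k (s :: l) = s ++ k :: joink k l.
Proof. by case: l. Qed.

Lemma mem_joink k l x : 1 < size l ->
  (x \in joink k l) = (x == k) || has (fun s => x \in s) l.
Proof.
elim: l => [|s [|s' l] IH] // _.
rewrite joink_cons // mem_cat in_cons.
case: l IH => [|s'' l] IH.
  by rewrite /= orbF; case: (x \in s); case: (x == k); case: (x \in s').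
rewrite IH //=. by case: (x \in s); case: (x == k).
Qed.

Lemma blevels_vlevels t : wf_itree t -> blevels t =i vlevels t.
Proof.
elim/itree_ind2: t => [|k ch IH] // /and3P[sz _ wfs] x.
rewrite blevelsE mem_joink ?size_map // vlevelsE in_cons; congr (_ || _).
elim: ch IH wfs {sz} => [|c l IHl] //= IH /andP[wc wl].
rewrite mem_cat IH //; last by left.
congr (_ || _); apply: IHl => // c' H; apply: IH; by right.
Qed.

Lemma vlevels_le t : wf_itree t -> forall x, x \in vlevels t ->
  if root_level t is Some k then x <= k else false.
Proof.
elim/itree_ind2: t => [|k ch IH] //= /and3P[_ rl wfs] x.
rewrite in_cons => /orP[/eqP -> //|].
elim: ch IH rl wfs => [|c l IHl] //= IH /andP[rc rl] /andP[wc wl].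
rewrite mem_cat => /orP[xc|]; last first.
  by apply: IHl => // c' H; apply: IH; right.
have := IH c (or_introl erefl) wc x xc.
case: (c) rc => [|k' ch'] //= /ltnW Hk Hx; exact: leq_trans Hx Hk.
Qed.

Definition mx (s : seq nat) := foldr maxn 0 s.

Lemma in_mx s x : x \in s -> x <= mx s.
Proof.
elim: s => //= y s IH; rewrite in_cons => /orP[/eqP ->|/IH H].
  exact: leq_maxl.
exact: leq_trans H (leq_maxr _ _).
Qed.

Lemma mx_le s m : (forall x, x \in s -> x <= m) -> mx s <= m.
Proof.
elim: s => //= y s IH H; rewrite geq_max H ?mem_head //=.
by apply: IH => x xs; apply: H; rewrite in_cons xs orbT.
Qed.

Lemma mx_mem s : s != [::] -> mx s \in s.
Proof.
elim: s => // y s IH _; case: s IH => [|z s] IH.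
  by rewrite /mx /= maxn0 mem_head.
have -> : mx [:: y, z & s] = maxn y (mx (z :: s)) by [].
rewrite in_cons; case: (leqP y (mx (z :: s))) => H.
  by rewrite IH // orbT.
by rewrite eqxx.
Qed.

Lemma mx_eq s s' : s =i s' -> mx s = mx s'.
Proof.
move=> E; apply/eqP; rewrite eqn_leq; apply/andP; split; apply: mx_le => x.
  by rewrite E; apply: in_mx.
by rewrite -E; apply: in_mx.
Qed.

Lemma mx_std s k : (forall i, i \in s <-> 1 <= i <= k) -> mx s = k.
Proof.
move=> H; apply/eqP; rewrite eqn_leq; apply/andP; split.
  by apply: mx_le => x /H /andP[].
case: k H => // k H; apply: in_mx; apply/H; by rewrite leqnn.
Qed.

Fixpoint splitk (k : nat) (w : seq nat) : seq (seq nat) :=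
  match w with
  | [::] => [:: [::]]
  | x :: w' =>
      let r := splitk k w' in
      if x == k then [::] :: r else
      match r with [::] => [:: [:: x]] | h :: t => (x :: h) :: t end
  end.

Lemma splitk_cons k w : exists h t, splitk k w = h :: t.
Proof.
case: w => [|x w] /=; first by exists [::], [::].
case: (x == k); first by exists [::], (splitk k w).
case: (splitk k w) => [|h t]; first by exists [:: x], [::].
by exists (x :: h), t.
Qed.

Lemma joink_splitk k w : joink k (splitk k w) = w.
Proof.
elim: w => //= x w IH; case: eqP => [->|_].
  have [h [t E]] := splitk_cons k w.
  by rewrite joink_cons ?E // -E IH.
have [h [t E]] := splitk_cons k w; rewrite E in IH *.
case: t E IH => [|h' t] E <- //.
Qed.

Lemma splitk_cat k s r : k \notin s ->
  splitk k (s ++ r) = if splitk k r is h :: t then (s ++ h) :: t else [::].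
Proof.
elim: s => [|x s IH] /=.
  by have [h [t ->]] := splitk_cons k r.
rewrite in_cons negb_or => /andP[xk ks]; rewrite eq_sym (negbTE xk) IH //.
by have [h [t ->]] := splitk_cons k r.
Qed.

Lemma splitk_joink k (l : seq (seq nat)) : l != [::] -> all (fun s : seq nat => k \notin s) l ->
  splitk k (joink k l) = l.
Proof.
elim: l => [|s [|s' l] IH] //= _ /andP[ks kl].
  by rewrite -[s]cats0 splitk_cat //= cats0.
by rewrite splitk_cat //= eqxx IH //= cats0.
Qed.

Lemma size_splitk k w : k \in w -> 1 < size (splitk k w).
Proof.
elim: w => //= x w IH; rewrite in_cons eq_sym; case: eqP => [_ _|_ /= /IH].
  by have [h [t ->]] := splitk_cons k w.
by have [h [t E]] := splitk_cons k w; rewrite E.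
Qed.

Lemma mem_splitk k w s x : s \in splitk k w -> x \in s -> (x \in w) && (x != k).
Proof.
elim: w s => /= [|y w IH] s; first by rewrite inE => /eqP ->.
have [h [t E]] := splitk_cons k w.
have K : forall s', s' \in splitk k w -> x \in s' -> (x \in y :: w) && (x != k).
  by move=> s' /IH H /H /andP[H1 H2]; rewrite in_cons H1 H2 orbT.
case: eqP => [_|yk].
  by rewrite in_cons => /orP[/eqP -> //|]; apply: K.
rewrite E in_cons => /orP[/eqP ->|st].
  rewrite in_cons => /orP[/eqP ->|xh]; first by rewrite mem_head; apply/eqP.
  by apply: (K h) => //; rewrite E mem_head.
by apply: K; rewrite E in_cons st orbT.
Qed.

Lemma size_seg k w s : s \in splitk k w -> size s + count (pred1 k) w <= size w.
Proof.
elim: w s => /= [|y w IH] s; first by rewrite inE => /eqP ->.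
have [h [t E]] := splitk_cons k w.
case: eqP => [Eyk|yk].
  have -> : true + count_mem k w = (count_mem k w).+1 by [].
  rewrite in_cons => /orP[/eqP -> /=|/IH H].
    by rewrite add0n ltnS count_size.
  by rewrite addnS ltnS.
have -> : false + count_mem k w = count_mem k w by [].
rewrite E in_cons => /orP[/eqP ->|st].
  have : h \in splitk k w by rewrite E mem_head.
  by move/IH => /= H; rewrite addSn ltnS.
have : s \in splitk k w by rewrite E in_cons st orbT.
move/IH => H; exact: leq_trans H (leqnSn _).
Qed.

Lemma size_joink_le k l s : s \in l -> size s <= size (joink k l).
Proof.
elim: l => [|s0 l IH] //; case: l IH => [|s1 l] IH; rewrite in_cons => /orP[/eqP->|H] //.
  by rewrite joink_cons // size_cat leq_addr.
rewrite joink_cons // size_cat /=; apply: leq_trans (IH H) _.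
exact: leq_trans (leqnSn _) (leq_addl _ _).
Qed.

Lemma size_joink_lt k l s : s \in l -> 1 < size l -> size s < size (joink k l).
Proof.
case: l => [|s0 [|s1 l]] //; rewrite in_cons => /orP[/eqP->|H] _;
  rewrite joink_cons // size_cat; first by move: (joink k (s1 :: l)) => j /=; rewrite addnS ltnS leq_addr.
have := @size_joink_le k _ _ H; move: (joink k (s1 :: l)) => j Hj /=.
apply: leq_ltn_trans Hj _; by rewrite addnS ltnS leq_addl.
Qed.


Lemma InT_map2 (A : Type) (B : eqType) (g : A -> B) c ch : InT c ch -> g c \in map g ch.
Proof.
elim: ch => //= d ch IH [->|/IH H]; first by rewrite mem_head.
by rewrite in_cons H orbT.
Qed.

Lemma map_idT (A : Type) (g : A -> A) ch : (forall c, InT c ch -> g c = c) -> map g ch = ch.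
Proof.
elim: ch => //= c ch IH H; rewrite H; last by left.
by rewrite IH // => d Hd; apply: H; right.
Qed.

Fixpoint build (f : nat) (w : seq nat) : itree :=
  match f with
  | 0 => ILeaf
  | f'.+1 => if w is [::] then ILeaf else INode (mx w) (map (build f') (splitk (mx w) w))
  end.

Lemma build_ok f w : size w < f ->
  [/\ wf_itree (build f w), blevels (build f w) = w &
      root_level (build f w) = (if w is [::] then None else Some (mx w))].
Proof.
elim: f w => [|f IH] w //; case: w => [|x w'] sz; first by [].
set w := x :: w' in sz *.
set k := mx w.
have kw : k \in w by apply: mx_mem.
have segs : forall s, s \in splitk k w -> size s < f.
  move=> s /size_seg H; have : 0 < count (pred1 k) w by rewrite -has_count has_pred1.
  move=> c0; have sz' : size w <= f by [].
  apply: leq_trans sz'; apply: leq_trans H; by rewrite -addn1 leq_add2l.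
have -> : build f.+1 w = INode k (map (build f) (splitk k w)) by [].
split => //.
- apply/and3P; split.
  + by rewrite size_map size_splitk.
  + rewrite all_map; apply/allP => s sin /=.
    have [_ _ ->] := IH s (segs s sin).
    case: s sin => [|y s] sin //.
    have /andP[H1 H2] := @mem_splitk _ _ _ _ sin (@mx_mem (y :: s) isT).
    by rewrite ltn_neqAle H2 in_mx.
  + rewrite all_map; apply/allP => s sin /=.
    by case: (IH s (segs s sin)).
- rewrite blevelsE -map_comp.
  have -> : map (blevels \o build f) (splitk k w) = splitk k w.
    rewrite -[RHS]map_id; apply/eq_in_map => s sin /=.
    by case: (IH s (segs s sin)).
  exact: joink_splitk.
Qed.

Lemma wf_child_notin k ch : wf_itree (INode k ch) -> all (fun c => k \notin blevels c) ch.
Proof.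
move=> /and3P[_ rl wfs]; elim: ch rl wfs => //= c l IH /andP[rc rl] /andP[wc wl].
rewrite (IH rl wl) andbT (blevels_vlevels _ wc); apply/negP => kc.
have := @vlevels_le c wc k kc.
case: (c) rc => [|k' ch'] //= ltk le.
by rewrite ltnNge le in ltk.
Qed.

Lemma build_blevels f t : wf_itree t -> size (blevels t) < f -> build f (blevels t) = t.
Proof.
elim: f t => [|f IH] t wft szt; first by move: szt; rewrite ltn0.
case: t wft szt => [|k ch] wft szt; first by [].
have wft' := wft.
move: wft' szt; rewrite blevelsE => wft' szt.
set l := map blevels ch in szt *.
have sz2 : 1 < size l by rewrite size_map; case/and3P: wft.
have kin : k \in joink k l by rewrite mem_joink // eqxx.
have mxk : mx (joink k l) = k.
  apply/eqP; rewrite eqn_leq in_mx // andbT; apply: mx_le => x.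
  rewrite -blevelsE (blevels_vlevels _ wft) => /(vlevels_le _ wft) //.
case E: (joink k l) => [|y w]; first by rewrite E in kin.
have -> : build f.+1 (y :: w) = INode (mx (y::w)) (map (build f) (splitk (mx (y::w)) (y::w))) by [].
rewrite -E mxk splitk_joink //; last first.
  by rewrite all_map; exact: wf_child_notin.
  by case: (l) sz2.
congr INode; rewrite -map_comp; apply: map_idT => c cin /=.
case/and3P: wft => _ _ wfs.
apply: IH; first exact: (@all_In _ _ _ _ wfs cin).
apply: leq_trans (@size_joink_lt k _ _ (@InT_map2 _ _ blevels _ _ cin) sz2) _.
exact: szt.
Qed.

Definition sigw n (w : seq nat) k : seq {set 'I_n} :=
  [seq [set j : 'I_n | nth 0 w j == i] | i <- iota 1 k].

Lemma mem_bigcup_seq n (s : seq {set 'I_n}) x :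
  (x \in (\bigcup_(A <- s) A : {set 'I_n})) = has (fun A : {set 'I_n} => x \in A) s.
Proof. by elim: s => [|A s IH]; rewrite ?big_nil ?big_cons ?inE //= IH. Qed.

Lemma uniq_pairwise (T : eqType) (r : rel T) s :
  uniq s -> (forall x y, x != y -> r x y) -> pairwise r s.
Proof.
elim: s => //= x s IH /andP[xs us] H; rewrite IH // andbT.
apply/allP => y ys; apply: H; apply/negP => /eqP E; by rewrite E ys in xs.
Qed.

Lemma comp_word n w k : size w = n -> (forall i, i \in w <-> 1 <= i <= k) ->
  set_composition (sigw n w k).
Proof.
move=> Hs Hw; split.
- apply/allP => A /mapP [i]; rewrite mem_iota add1n ltnS => ik ->.
  have iw : i \in w by apply/Hw.
  have jn : index i w < n by rewrite -Hs index_mem.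
  by apply/set0Pn; exists (Ordinal jn); rewrite inE /= nth_index.
- rewrite pairwise_map; apply: uniq_pairwise; first exact: iota_uniq. move=> i i' neq /=.
  rewrite -setI_eq0; apply/eqP/setP => j; rewrite !inE.
  apply/negbTE/negP => /andP[/eqP -> /eqP E]; by rewrite E eqxx in neq.
- apply/setP => j; rewrite inE mem_bigcup_seq has_map; apply/hasP.
  exists (nth 0 w j).
    rewrite mem_iota add1n ltnS; apply/Hw; apply: mem_nth; by rewrite Hs.
  by rewrite /= inE.
Qed.

Lemma inj_word n w1 w2 k1 k2 : size w1 = n -> size w2 = n ->
  (forall i, i \in w1 <-> 1 <= i <= k1) -> (forall i, i \in w2 <-> 1 <= i <= k2) ->
  sigw n w1 k1 = sigw n w2 k2 -> w1 = w2.
Proof.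
move=> S1 S2 H1 H2 E.
have Ek : k1 = k2 by have := congr1 size E; rewrite !size_map !size_iota.
subst k2.
apply: (@eq_from_nth _ 0); first by rewrite S1 S2.
move=> j jlt; rewrite S1 in jlt.
have : nth 0 w1 j \in w1 by apply: mem_nth; rewrite S1.
move/H1 => /andP[i1 ik].
have := congr1 (fun s => nth set0 s (nth 0 w1 j).-1) E.
have il : (nth 0 w1 j).-1 < k1 by rewrite -ltnS prednK.
rewrite /sigw !(nth_map 0) ?size_iota // nth_iota // add1n prednK //.
move/setP/(_ (Ordinal jlt)); rewrite !inE /= eqxx => /esym/eqP ->.
by [].
Qed.

Lemma surj_word n (P : seq {set 'I_n}) : set_composition P ->
  exists w, [/\ size w = n, (forall i, i \in w <-> 1 <= i <= size P)
            & sigw n w (size P) = P].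
Proof.
case=> ne pw un.
pose fj (j : 'I_n) := find (fun A : {set 'I_n} => j \in A) P.
have hasj : forall j, has (fun A : {set 'I_n} => j \in A) P.
  by move=> j; rewrite -mem_bigcup_seq un inE.
have flt : forall j, fj j < size P by move=> j; rewrite -has_find.
have key : forall j i, i < size P -> (fj j == i) = (j \in nth set0 P i).
  move=> j i ilt; apply/eqP/idP => [<-|jin]; first exact: (nth_find set0 (hasj j)).
  case: (ltngtP (fj j) i) => // [lt|gt].
    have := nth_find set0 (hasj j).
    move/(pairwiseP set0): pw => pw.
    have D := pw (fj j) i (flt j) ilt lt.
    by move=> Hc; rewrite (disjointFr D Hc) in jin.
  by have := before_find set0 gt; rewrite jin.
exists [seq (fj j).+1 | j <- enum 'I_n].
have nthw : forall j : 'I_n, nth 0 [seq (fj j).+1 | j <- enum 'I_n] j = (fj j).+1.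
  by move=> j; rewrite (nth_map j) ?size_enum_ord // nth_ord_enum.
split.
- by rewrite size_map size_enum_ord.
- move=> i; split.
    by case/mapP => j _ ->; rewrite /= flt.
  case/andP => i1 ik.
  have il : i.-1 < size P by rewrite -ltnS prednK.
  have : nth set0 P i.-1 != set0 by apply: (allP ne); apply: mem_nth.
  case/set0Pn => j jin; apply/mapP; exists j; first by rewrite mem_enum.
  by have := key j _ il; rewrite jin => /eqP ->; rewrite prednK.
- apply: (@eq_from_nth _ set0); first by rewrite size_map size_iota.
  move=> i; rewrite size_map size_iota => ilt.
  rewrite (nth_map 0) ?size_iota // nth_iota // add1n.
  by apply/setP => j; rewrite inE nthw eqSS key.
Qed.

Lemma sigmaE n t k : wf_itree t -> (forall i, i \in vlevels t <-> 1 <= i <= k) ->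
  sigma n t = sigw n (blevels t) k.
Proof. by move=> wf Hk; rewrite /sigma /sigw; have -> : nlevels t = k by exact: mx_std Hk. Qed.

Lemma tree_word n t : increasing_tree t -> exists k,
  (forall i, i \in blevels t <-> 1 <= i <= k) /\ sigma n t = sigw n (blevels t) k.
Proof.
case=> wf [k Hk]; exists k; split; last exact: sigmaE.
by move=> i; rewrite (blevels_vlevels _ wf).
Qed.

Theorem theorem1p1 (n : nat) :
  (forall t : itree, increasing_tree t -> nbranchings t = n ->
     set_composition (sigma n t)) /\
  (forall t1 t2 : itree,
     increasing_tree t1 -> nbranchings t1 = n ->
     increasing_tree t2 -> nbranchings t2 = n ->
     sigma n t1 = sigma n t2 -> t1 = t2) /\
  (forall P : seq {set 'I_n}, set_composition P ->
     exists t : itree,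
       [/\ increasing_tree t, nbranchings t = n & sigma n t = P]).
Proof.
split; [|split].
- move=> t inc nb; have [k [Hl ->]] := tree_word n _ inc.
  exact: comp_word.
- move=> t1 t2 inc1 nb1 inc2 nb2 E.
  have [k1 [H1 E1]] := tree_word n _ inc1.
  have [k2 [H2 E2]] := tree_word n _ inc2.
  rewrite E1 E2 in E.
  have Ew := inj_word _ _ _ _ _ nb1 nb2 H1 H2 E.
  case: inc1 => wf1 _; case: inc2 => wf2 _.
  rewrite -(build_blevels n.+1 _ wf1) ?Ew ?(build_blevels n.+1 _ wf2) //.
  1,2: have S2 : size (blevels t2) = n := nb2; by rewrite S2.
- move=> P HP; have [w [Sw Hw Ew]] := surj_word _ _ HP.
  have sw : size w < n.+1 by rewrite Sw.
  have [wf bl _] := build_ok n.+1 w sw.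
  have Hv : forall i, i \in vlevels (build n.+1 w) <-> 1 <= i <= size P.
    by move=> i; rewrite -(blevels_vlevels _ wf) bl.
  exists (build n.+1 w); split.
  + by split => //; exists (size P).
  + by rewrite /nbranchings bl.
  + by rewrite (sigmaE n _ _ wf Hv) bl.
Qed.
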